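(* Let $(X,d)$ be a locally compact metric space with a flow $\pi$ and let $M\subseteq X$. For $\varepsilon,t>0$ put $A_{\varepsilon,t}=\overline{P_t(M,\varepsilon)\cdot[t,\infty)}$. Then $$\bigcap_{\varepsilon>0,\,t>0}P_t(M,\varepsilon)=\bigcap_{\varepsilon>0,\,t>0}A_{\varepsilon,t}.$$
   Context: A flow is a continuous map $\pi: X\times\mathbb{R}\to X$ with $\pi(x,0)=x$ and $\pi(\pi(x,t),s)=\pi(x,t+s)$; write $x\cdot t=\pi(x,t)$ and $Y\cdot T=\{y\cdot s: y\in Y, s\in T\}$. For $x,y\in X$ and $\varepsilon,t>0$, an $(\varepsilon,t)$-chain from $x$ to $y$ is a pair of finite sequences $x=x_1,\dots,x_{n+1}=y$ in $X$ and $t_1,\dots,t_n$ in $\mathbb{R}^+$ with $t_i\ge t$ and $d(x_i\cdot t_i,x_{i+1})\le\varepsilon$ for all $i$. $P_t(M,\varepsilon)$ is the set of $y\in X$ such that there is an $(\varepsilon,t)$-chain from $x$ to $y$ for some $x\in M$. *)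

(* Defs.v *)
From Stdlib Require Import Reals List.
Open Scope R_scope.

Section MetricDefs.
Variable X : Type.
Variable d : X -> X -> R.

Definition is_metric : Prop :=
  (forall x y, 0 <= d x y) /\ (forall x y, d x y = 0 <-> x = y) /\
  (forall x y, d x y = d y x) /\ (forall x y z, d x z <= d x y + d y z).

Definition mopen (U : X -> Prop) : Prop :=
  forall x, U x -> exists r, 0 < r /\ forall y, d x y < r -> U y.

Definition mcompact (K : X -> Prop) : Prop :=
  forall (I : Type) (U : I -> X -> Prop),
    (forall i, mopen (U i)) -> (forall x, K x -> exists i, U i x) ->
    exists l : list I, forall x, K x -> exists i, In i l /\ U i x.

Definition locally_compact : Prop :=
  forall x, exists K, mcompact K /\ exists r, 0 < r /\ forall y, d x y < r -> K y.

Definition mclosure (A : X -> Prop) (x : X) : Prop :=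
  forall e, 0 < e -> exists y, A y /\ d x y < e.

Definition is_flow (pi : X -> R -> X) : Prop :=
  (forall x, pi x 0 = x) /\
  (forall x t s, pi (pi x t) s = pi x (t + s)) /\
  (forall x t e, 0 < e -> exists delta, 0 < delta /\
     forall y s, d x y < delta -> Rabs (s - t) < delta -> d (pi x t) (pi y s) < e).

Definition chain (pi : X -> R -> X) (eps t : R) (x y : X) : Prop :=
  exists (n : nat) (xs : nat -> X) (ts : nat -> R),
    (1 <= n)%nat /\ xs 0%nat = x /\ xs n = y /\
    forall i, (i < n)%nat -> t <= ts i /\ d (pi (xs i) (ts i)) (xs (S i)) <= eps.

Definition Pt (pi : X -> R -> X) (t : R) (M : X -> Prop) (eps : R) (y : X) : Prop :=
  exists x, M x /\ chain pi eps t x y.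

Definition Aset (pi : X -> R -> X) (M : X -> Prop) (eps t : R) : X -> Prop :=
  mclosure (fun z => exists y s, Pt pi t M eps y /\ t <= s /\ z = pi y s).

End MetricDefs.

(* Main.v *)
Require Import Defs.
From Stdlib Require Import Reals Lra Lia Arith.
Open Scope R_scope.

Theorem lemma3p4 (X : Type) (d : X -> X -> R) (pi : X -> R -> X) (M : X -> Prop) :
  is_metric X d -> locally_compact X d -> is_flow X d pi ->
  forall y : X,
    (forall eps t, 0 < eps -> 0 < t -> Pt X d pi t M eps y) <->
    (forall eps t, 0 < eps -> 0 < t -> Aset X d pi M eps t y).
Proof.
  intros [Hpos [Hzero [Hsym Htri]]] _ [H0 [Hadd _]] y. split.
  - intros HP eps t He Ht e Hee.
    assert (Hm : 0 < Rmin eps (e/2)) by (apply Rmin_glb_lt; lra).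
    destruct (HP (Rmin eps (e/2)) (2*t) Hm ltac:(lra)) as [x [Mx [n [xs [ts [Hn [Hx0 [Hxn Hs]]]]]]]].
    destruct (Hs (n-1)%nat ltac:(lia)) as [Htl Hdl].
    replace (S (n-1)) with n in Hdl by lia.
    set (y' := pi (xs (n-1)%nat) (ts (n-1)%nat - t)).
    exists (pi y' t). split.
    + exists y', t. split; [|split; [lra|reflexivity]].
      exists x. split; [exact Mx|].
      exists n, (fun i => if Nat.eqb i n then y' else xs i),
        (fun i => if Nat.eqb i (n-1) then ts (n-1)%nat - t else ts i).
      split; [exact Hn|]. split.
      { destruct (Nat.eqb_spec 0 n); [lia|exact Hx0]. }
      split. { rewrite Nat.eqb_refl. reflexivity. }
      intros i Hi. destruct (Nat.eqb_spec i n); [lia|].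
      destruct (Nat.eqb_spec i (n-1)).
      * subst i. replace (S (n-1)) with n by lia. rewrite Nat.eqb_refl.
        split; [lra|]. unfold y'. rewrite (proj2 (Hzero _ _) eq_refl). lra.
      * destruct (Nat.eqb_spec (S i) n); [lia|].
        destruct (Hs i Hi) as [A B]. split; [lra|].
        apply Rle_trans with (1 := B). apply Rmin_l.
    + unfold y'. rewrite Hadd. replace (ts (n - 1)%nat - t + t) with (ts (n-1)%nat) by ring.
      rewrite Hsym. rewrite <- Hxn.
      apply Rle_lt_trans with (1 := Hdl).
      apply Rle_lt_trans with (e/2); [apply Rmin_r|lra].
  - intros HA eps t He Ht.
    destruct (HA eps t He Ht eps He) as [z [[y' [s [[x [Mx [n [xs [ts [Hn [Hx0 [Hxn Hs]]]]]]]] [Hst Hz]]]] Hdz]].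
    exists x. split; [exact Mx|].
    exists (S n), (fun i => if Nat.leb i n then xs i else y),
      (fun i => if Nat.ltb i n then ts i else s).
    split; [lia|]. split. { simpl. exact Hx0. }
    split. { destruct (Nat.leb_spec (S n) n); [lia|reflexivity]. }
    intros i Hi. destruct (Nat.ltb_spec i n).
    + destruct (Nat.leb_spec i n); [|lia]. destruct (Nat.leb_spec (S i) n); [|lia].
      apply Hs; lia.
    + assert (i = n) by lia. subst i.
      rewrite Nat.leb_refl. destruct (Nat.leb_spec (S n) n); [lia|].
      split; [lra|]. rewrite Hxn, <- Hz, Hsym. lra.
Qed.
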